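(* Let $p$ be an odd prime, $\zeta_p = e^{2\pi i/p}$, and for $1 \leq i \leq p-1$ let $$\rho_i = \sqrt{2} - \frac{2\sqrt{2}}{(1+\sqrt{2})^{-2/p}\zeta_p^i + 1},$$ where $(1+\sqrt{2})^{-2/p}$ is the positive real value (these are the non-real roots of $\frac{1}{2\sqrt{2}}\left((1+\sqrt{2})(x+\sqrt{2})^p - (1-\sqrt{2})(x-\sqrt{2})^p\right)$). Then $$\prod_{i=1}^{p-1} |\operatorname{Im}(\rho_i)| \geq p\, 2^{\frac{p-3}{2}}.$$ *)

(* Defs.v *)
From Stdlib Require Import Reals List.
From Coquelicot Require Import Coquelicot.
Open Scope R_scope.

Definition zeta (p : nat) : C := (cos (2 * PI / INR p), sin (2 * PI / INR p)).

Definition rho (p i : nat) : C :=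
  Cminus (RtoC (sqrt 2))
    (Cdiv (RtoC (2 * sqrt 2))
       (Cplus (Cmult (RtoC (Rpower (1 + sqrt 2) (- 2 / INR p))) (pow_n (zeta p) i))
              (RtoC 1))).

Definition prod_abs_im_rho (p : nat) : R :=
  fold_right Rmult 1 (map (fun i => Rabs (Im (rho p i))) (seq 1 (p - 1))).

(* Main.v *)
Require Import Defs.
From Stdlib Require Import Reals ZArith Znumtheory Lra Lia List.
From Coquelicot Require Import Coquelicot.
Open Scope R_scope.

Definition cs (n k : nat) := cos (2*PI*INR k / INR n).
Definition sn (n k : nat) := sin (2*PI*INR k / INR n).

Lemma ang_S n k : (0 < n)%nat -> 2*PI*INR (S k) / INR n = 2*PI*INR 1/INR n + 2*PI*INR k/INR n.
Proof. intros. rewrite S_INR. simpl. field. apply not_0_INR. lia. Qed.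

Lemma cs_S n k : (0 < n)%nat -> cs n (S k) = cs n 1 * cs n k - sn n 1 * sn n k.
Proof. intros. unfold cs, sn. rewrite ang_S by auto. apply cos_plus. Qed.
Lemma sn_S n k : (0 < n)%nat -> sn n (S k) = sn n 1 * cs n k + cs n 1 * sn n k.
Proof. intros. unfold cs, sn. rewrite ang_S by auto. apply sin_plus. Qed.
Lemma cs_0 n : cs n 0 = 1.
Proof. unfold cs. simpl. replace (2*PI*0/INR n) with 0 by (unfold Rdiv; ring). apply cos_0. Qed.
Lemma sn_0 n : sn n 0 = 0.
Proof. unfold sn. simpl. replace (2*PI*0/INR n) with 0 by (unfold Rdiv; ring). apply sin_0. Qed.
Lemma cs_n n : (0 < n)%nat -> cs n n = 1.
Proof. intros. unfold cs. replace (2*PI*INR n/INR n) with (2*PI) by (field; apply not_0_INR; lia). apply cos_2PI. Qed.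
Lemma sn_n n : (0 < n)%nat -> sn n n = 0.
Proof. intros. unfold sn. replace (2*PI*INR n/INR n) with (2*PI) by (field; apply not_0_INR; lia). apply sin_2PI. Qed.
Lemma cs2 n k : cs n k * cs n k + sn n k * sn n k = 1.
Proof. unfold cs, sn. pose proof (sin2_cos2 (2*PI*INR k/INR n)). unfold Rsqr in H. lra. Qed.
Lemma cs_neq1 n k : (0 < k < n)%nat -> cs n k <> 1.
Proof. intros. unfold cs.
  assert (Hk : 0 < INR k) by (apply lt_0_INR; lia).
  assert (Hkn : INR k < INR n) by (apply lt_INR; lia).
  set (t := PI*INR k/INR n).
  assert (0 < t < PI).
  { unfold t. pose proof PI_RGT_0. split.
    - apply Rdiv_lt_0_compat; [nra | lra].
    - apply Rmult_lt_reg_r with (INR n); [lra|]. unfold Rdiv. rewrite Rmult_assoc, Rinv_l by lra. nra. }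
  replace (2*PI*INR k/INR n) with (2*t) by (unfold t, Rdiv; ring).
  rewrite cos_2a_sin. pose proof (sin_gt_0 t (proj1 H0) (proj2 H0)). nra. Qed.
Definition PRD (f : nat -> R) n := fold_right Rmult 1 (map f (List.seq 1 (n-1))).
Definition GS x n := fold_right Rplus 0 (map (pow x) (List.seq 0 n)).
Definition Q n x k := x*x - (x*cs n k + x*cs n k) + 1.

Module MC.
From HB Require Import structures.
From mathcomp Require Import all_boot all_algebra.
From mathcomp Require Import complex ring.
Import GRing.Theory Num.Theory.
Local Open Scope ring_scope.
Local Open Scope complex_scope.

Section K.
Variable F : rcfType.

Lemma prim_prod (n : nat) (z : F[i]) : n.-primitive_root z ->
  forall y, \prod_(1 <= k < n) (y - z ^+ k) = \sum_(k < n) y ^+ k.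
Proof.
move=> pz y.
have n0 := prim_order_gt0 pz.
have h := factor_Xn_sub_1 pz.
rewrite big_ltn // expr0 subrX1 in h.
have e : \prod_(1 <= k < n) ('X - (z ^+ k)%:P) = \sum_(i < n) 'X^i.
  apply: (mulfI (negbT (polyXsubC_eq0 1))). rewrite polyC1 h. done.
have := congr1 (fun p => p.[y]) e.
rewrite horner_prod horner_sum /=.
under eq_bigr do rewrite hornerXsubC.
by under [in X in _ = X -> _]eq_bigr do rewrite hornerXn.
Qed.


Lemma keyA (n : nat) (c s : nat -> F) :
 (0 < n)%N -> c 0%N = 1 -> s 0%N = 0 ->
 (forall k, c k.+1 = c 1%N * c k - s 1%N * s k) ->
 (forall k, s k.+1 = s 1%N * c k + c 1%N * s k) ->
 (forall k, c k * c k + s k * s k = 1) ->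
 (forall k, (0 < k < n)%N -> c k != 1) ->
 c n = 1 -> s n = 0 ->
 forall x : F, \prod_(1 <= k < n) (x * x - (x * c k + x * c k) + 1)
   = (\sum_(k < n) x ^+ k) * (\sum_(k < n) x ^+ k).
Proof.
move=> n0 c0 s0 cS sS cs1 cne cn sn x.
pose z := c 1%N +i* s 1%N.
pose z' := c 1%N +i* - s 1%N.
have pz : forall k, z ^+ k = c k +i* s k.
  elim=> [|k IH]; first by rewrite expr0 c0 s0.
  rewrite exprS IH /z; simpc; rewrite (cS k) (sS k). congr (_ +i* _); ring.
have pz' : forall k, z' ^+ k = c k +i* - s k.
  elim=> [|k IH]; first by rewrite expr0 c0 s0 oppr0.
  rewrite exprS IH /z'; simpc; rewrite (cS k) (sS k). congr (_ +i* _); ring.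
have prim : forall w : F[i], (forall k, w ^+ k = c k +i* s k \/ w ^+ k = c k +i* - s k) ->
   n.-primitive_root w.
  move=> w hw. apply/andP; split => //. apply/forallP => i. apply/eqP.
  case: eqP => [->|ne].
    apply/unity_rootP. by case: (hw n) => ->; rewrite cn sn ?oppr0.
  apply/negbTE/negP => /unity_rootP.
  have hi : (0 < i.+1 < n)%N.
    by rewrite ltn0Sn /= ltn_neqAle ltn_ord andbT; apply/eqP.
  by case: (hw i.+1) => -> [] /eqP; rewrite (negbTE (cne _ hi)).
have h1 := @prim_prod n z (prim z (fun k => or_introl (pz k))) (x%:C).
have h2 := @prim_prod n z' (prim z' (fun k => or_intror (pz' k))) (x%:C).
apply: (@complexI F).
have e : \sum_(k < n) x%:C ^+ k = (\sum_(k < n) x ^+ k)%:C by rewrite rmorph_sum; apply: eq_bigr => k _; rewrite rmorphXn.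
rewrite e in h1 h2.
have H : (\prod_(1 <= k < n) (x * x - (x * c k + x * c k) + 1))%:C
   = (\sum_(k < n) x ^+ k)%:C * (\sum_(k < n) x ^+ k)%:C.
  rewrite -{1}h1 -h2 -big_split /= rmorph_prod.
  apply: eq_bigr => k _. rewrite pz pz'. simpc. rewrite /real_complex_def.
  congr (_ +i* _); last by ring.
  rewrite -(cs1 k). ring.
rewrite -rmorphM in H. have := complexI H. done.
Qed.

End K.

From mathcomp Require Import Rstruct.

Lemma big_fold (G : nat -> R) (s : list nat) :
  \big[*%R/1]_(i <- s) G i = fold_right Rmult 1 (List.map G s).
Proof. elim: s => [|a s IH]; by rewrite ?big_nil ?big_cons ?IH. Qed.

Lemma bigs_fold (G : nat -> R) (s : list nat) :
  \big[+%R/0]_(i <- s) G i = fold_right Rplus 0 (List.map G s).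
Proof. elim: s => [|a s IH]; by rewrite ?big_nil ?big_cons ?IH. Qed.

Lemma iota_seq m k : iota m k = List.seq m k.
Proof. by elim: k m => //= k IH m; rewrite IH. Qed.

Lemma keyR n x : lt 0 n -> PRD (Q n x) n = Rmult (GS x n) (GS x n).
Proof.
move=> n0. have n0' : (0 < n)%N by apply/ltP.
have cne : forall k, (0 < k < n)%N -> cs n k != 1.
  move=> k /andP[/ltP h1 /ltP h2]. apply/eqP. apply: cs_neq1. lia.
have K := @keyA R n (cs n) (sn n) n0' (cs_0 n) (sn_0 n) (fun k => cs_S n k n0)
   (fun k => sn_S n k n0) (cs2 n) cne (cs_n n n0) (sn_n n n0) x.
rewrite big_fold /index_iota iota_seq -(big_mkord xpredT (fun k => x ^+ k)) bigs_fold
  /index_iota iota_seq subn0 in K.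
rewrite /PRD /GS.
have -> : List.map (pow x) (List.seq 0 n) = List.map (fun k => x ^+ k) (List.seq 0 n).
  apply: List.map_ext => k. by rewrite RpowE.
exact: K.
Qed.
End MC.

Lemma zeta_cs p : zeta p = (cs p 1, sn p 1).
Proof. unfold zeta, cs, sn. simpl INR. rewrite Rmult_1_r. reflexivity. Qed.

Lemma pow_zeta p : (0 < p)%nat -> forall i, pow_n (zeta p) i = (cs p i, sn p i).
Proof.
  intros Hp i. induction i as [|i IH].
  - simpl. rewrite cs_0, sn_0. reflexivity.
  - simpl pow_n. rewrite IH, (cs_S p i Hp), (sn_S p i Hp), zeta_cs.
    unfold mult; simpl. unfold Cmult; simpl. f_equal; ring.
Qed.

Lemma Im_rho p i : (0 < p)%nat ->
  let r := Rpower (1 + sqrt 2) (- 2 / INR p) in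
  Im (rho p i) = 2 * sqrt 2 * (r * sn p i) / ((r * cs p i + 1)^2 + (r * sn p i)^2).
Proof.
  intros Hp r. unfold rho. rewrite pow_zeta by auto. fold r.
  unfold Cminus, Cdiv, Cplus, Cmult, Cinv, Copp, RtoC, Im. simpl.
  rewrite !Rmult_0_l, !Rminus_0_r, !Rplus_0_r. unfold Rdiv. ring.
Qed.

Lemma PRD_ext f g n : (forall k, f k = g k) -> PRD f n = PRD g n.
Proof. intros H. unfold PRD. induction (List.seq 1 (n-1)); simpl; congruence. Qed.
Lemma PRD_mul f g n : PRD (fun k => f k * g k) n = PRD f n * PRD g n.
Proof. unfold PRD. induction (List.seq 1 (n-1)); simpl. ring. rewrite IHl. ring. Qed.
Lemma PRD_const c n : PRD (fun _ => c) n = c ^ (n-1).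
Proof. unfold PRD. rewrite <- (List.length_seq (n-1) 1) at 2.
  induction (List.seq 1 (n-1)); simpl. ring. rewrite IHl. ring. Qed.
Lemma PRD_inv f n : PRD (fun k => / f k) n = / PRD f n.
Proof. unfold PRD. induction (List.seq 1 (n-1)); simpl. now rewrite Rinv_1.
  rewrite IHl, Rinv_mult. ring. Qed.
Lemma PRD_abs f n : PRD (fun k => Rabs (f k)) n = Rabs (PRD f n).
Proof. unfold PRD. induction (List.seq 1 (n-1)); simpl. now rewrite Rabs_R1.
  rewrite IHl, Rabs_mult. ring. Qed.

Lemma fold_scal x (f : nat -> R) l :
  fold_right Rplus 0 (List.map (fun k => x * f k) l) = x * fold_right Rplus 0 (List.map f l).
Proof. induction l; simpl. ring. rewrite IHl. ring. Qed.

Lemma GS_S x n : GS x (S n) = 1 + x * GS x n.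
Proof. unfold GS. simpl List.seq. rewrite <- List.seq_shift. simpl fold_right. rewrite List.map_map. simpl pow.
  rewrite fold_scal. ring. Qed.
Lemma GS_1 n : GS 1 n = INR n.
Proof. induction n. reflexivity. rewrite GS_S, IHn, S_INR. ring. Qed.
Lemma GS_geom x n : (x - 1) * GS x n = x ^ n - 1.
Proof. induction n. unfold GS. simpl. ring. rewrite GS_S. simpl. replace (x * x ^ n - 1) with (x * (x^n - 1) + (x - 1)) by ring. rewrite <- IHn. ring. Qed.

Lemma cs_ge n k : -1 <= cs n k.
Proof. unfold cs. apply COS_bound. Qed.

Theorem theorem6p1 (p : nat) (hp : prime (Z.of_nat p)) (hodd : Nat.Odd p) :
  prod_abs_im_rho p >= INR p * Rpower 2 ((INR p - 3) / 2).
Proof.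
  destruct hodd as [q Hq].
  assert (Hp2 := prime_ge_2 _ hp).
  assert (q1 : (1 <= q)%nat) by lia.
  assert (Hp : (0 < p)%nat) by lia.
  assert (HpR : INR p = 2 * INR q + 1) by (rewrite Hq, plus_INR, mult_INR; simpl; ring).
  assert (HqR : 1 <= INR q) by (apply (le_INR 1); lia).
  set (s2 := sqrt 2).
  assert (Hs2 : s2 * s2 = 2) by (apply sqrt_sqrt; lra).
  assert (Hs2p : 0 < s2) by (apply sqrt_lt_R0; lra).
  set (r := Rpower (1 + s2) (- 2 / INR p)).
  assert (Hr0 : 0 < r) by (unfold r, Rpower; apply exp_pos).
  assert (Hr1 : r < 1).
  { assert (0 < ln (1 + s2)) by (rewrite <- ln_1; apply ln_increasing; lra).
    assert (0 < INR p) by (apply lt_0_INR; lia).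
    assert (-2 / INR p < 0) by (unfold Rdiv; assert (0 < / INR p) by (apply Rinv_0_lt_compat; lra); nra).
    assert (-2 / INR p * ln (1 + s2) < 0) by nra.
    unfold r, Rpower. pose proof (exp_increasing _ _ H2) as He. rewrite exp_0 in He. exact He. }
  set (u := (r ^ 2) ^ q).
  assert (Hu0 : 0 < u) by (unfold u; apply pow_lt, pow_lt; lra).
  assert (Ha : r ^ p = 3 - 2 * s2).
  { unfold r. rewrite <- Rpower_pow by (unfold Rpower; apply exp_pos).
    rewrite Rpower_mult.
    replace (-2 / INR p * INR p) with (- INR 2)
      by (simpl; field; apply not_0_INR; lia).
    rewrite Rpower_Ropp, Rpower_pow by lra. simpl.
    field_simplify_eq. nra. nra. }
  assert (Hau : r ^ p = u * r) by (unfold u; rewrite <- pow_mult, Hq; rewrite pow_add; simpl; ring).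
  assert (H8 : (1 + u * r) ^ 2 = 8 * (u * r)) by (rewrite <- Hau, Ha; nra).
  assert (HA : forall k, Rabs (Im (rho p k)) = (2 * s2 * r) * Rabs (sn p k) * / Q p (- r) k).
  { intro k. rewrite Im_rho by auto. fold s2. fold r.
    assert (Hc := cs_ge p k). assert (Hcs := cs2 p k).
    assert (HD : (r * cs p k + 1) ^ 2 + (r * sn p k) ^ 2 = Q p (- r) k)
      by (unfold Q; nra).
    assert (HD0 : 0 < Q p (-r) k) by (rewrite <- HD; nra).
    rewrite HD. unfold Rdiv. rewrite !Rabs_mult, Rabs_inv.
    rewrite (Rabs_pos_eq (Q p (-r) k)) by lra.
    rewrite (Rabs_pos_eq 2) by lra. rewrite (Rabs_pos_eq s2) by lra.
    rewrite (Rabs_pos_eq r) by lra. ring. }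
  change (PRD (fun i => Rabs (Im (rho p i))) p >= INR p * Rpower 2 ((INR p - 3) / 2)).
  rewrite (PRD_ext _ _ p HA), PRD_mul, (PRD_mul (fun _ => 2 * s2 * r)), PRD_const, PRD_inv, PRD_abs.
  rewrite MC.keyR by auto.
  assert (HG : GS (- r) p = (1 + u * r) / (1 + r)).
  { assert (Hg := GS_geom (- r) p).
    replace ((- r) ^ p) with (- (r ^ p)) in Hg.
    2: { replace (- r) with ((-1) * r) by ring. rewrite Rpow_mult_distr, Hq.
         replace (2 * q + 1)%nat with (S (2 * q)) by lia. rewrite pow_1_odd. ring. }
    rewrite Hau in Hg. field_simplify_eq. 2: lra. nra. }
  rewrite HG.
  assert (HS : Rabs (PRD (sn p) p) * 2 ^ (p - 1) = INR p).
  { assert (H1 := MC.keyR p 1 Hp). assert (H2 := MC.keyR p (-1) Hp).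
    rewrite GS_1 in H1.
    assert (Hg := GS_geom (-1) p).
    replace ((-1) ^ p) with (-1) in Hg
      by (rewrite Hq; replace (2 * q + 1)%nat with (S (2 * q)) by lia; rewrite pow_1_odd; ring).
    assert (Hg1 : GS (-1) p = 1) by lra. rewrite Hg1 in H2.
    assert (H12 : PRD (Q p 1) p * PRD (Q p (-1)) p = PRD (fun k => 4 * (sn p k * sn p k)) p).
    { rewrite <- PRD_mul. apply PRD_ext. intro k. unfold Q. assert (Hcs := cs2 p k). nra. }
    rewrite !PRD_mul, PRD_const, H1, H2 in H12.
    apply Rsqr_inj.
    - apply Rmult_le_pos. apply Rabs_pos. apply pow_le. lra.
    - apply pos_INR.
    - unfold Rsqr. replace 4 with (2 ^ 2) in H12 by ring. rewrite <- pow_mult in H12.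
      replace (Rabs (PRD (sn p) p) * 2 ^ (p - 1) * (Rabs (PRD (sn p) p) * 2 ^ (p - 1)))
        with ((Rabs (PRD (sn p) p) * Rabs (PRD (sn p) p)) * (2 ^ (p - 1) * 2 ^ (p - 1))) by ring.
      rewrite <- Rabs_mult, Rabs_pos_eq by (apply Rle_0_sqr).
      rewrite <- pow_add. replace (p - 1 + (p - 1))%nat with (2 * (p - 1))%nat by lia.
      lra. }
  assert (HT : Rpower 2 ((INR p - 3) / 2) = 2 ^ q / 2).
  { replace ((INR p - 3) / 2) with (INR q + Ropp 1) by (rewrite HpR; field).
    rewrite Rpower_plus, Rpower_Ropp, Rpower_1, Rpower_pow by lra. unfold Rdiv. ring. }
  rewrite HT.
  replace (p - 1)%nat with (2 * q)%nat in * by lia.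
  set (T := 2 ^ q) in *.
  assert (HT0 : 0 < T) by (unfold T; apply pow_lt; lra).
  assert (Hpos : 0 < 2 ^ (2 * q)) by (apply pow_lt; lra).
  assert (HPs : Rabs (PRD (sn p) p) = INR p / 2 ^ (2 * q)) by (rewrite <- HS; field; lra).
  rewrite HPs.
  assert (E1 : (2 * s2 * r) ^ (2 * q) = T * T * T * u).
  { rewrite pow_mult. replace ((2 * s2 * r) ^ 2) with (2 * 2 * 2 * r ^ 2) by (simpl; nra).
    rewrite !Rpow_mult_distr. reflexivity. }
  assert (E2 : 2 ^ (2 * q) = T * T) by (rewrite pow_mult; unfold T; rewrite <- Rpow_mult_distr; f_equal; ring).
  rewrite E1, E2.
  assert (Hpp : 0 < INR p) by (apply lt_0_INR; lia).
  assert (E3 : T * T * T * u * (INR p / (T * T)) * / ((1 + u * r) / (1 + r) * ((1 + u * r) / (1 + r)))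
     = T * INR p * (1 + r) ^ 2 / (8 * r)).
  { replace (T * T * T * u * (INR p / (T * T)) * / ((1 + u * r) / (1 + r) * ((1 + u * r) / (1 + r))))
      with (T * u * INR p * (1 + r) ^ 2 / ((1 + u * r) ^ 2)) by (field; nra).
    rewrite H8. field. nra. }
  rewrite E3.
  apply Rle_ge. apply Rmult_le_reg_r with (8 * r). nra.
  replace (T * INR p * (1 + r) ^ 2 / (8 * r) * (8 * r)) with (T * INR p * (1 + r) ^ 2) by (field; lra).
  assert (0 < T * INR p) by nra. assert (0 <= (1 - r) ^ 2) by (apply pow2_ge_0).
  nra.
Qed.
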